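(* For $n\ge2$ let $\beta_n$ and $\gamma_n$ be the minimal zeros of $U^{\mathrm{e}}_n(x)$ and $S_n(x)$ respectively. Then $\beta_2=\gamma_2=-\frac12$; $$-1<\gamma_{2n+1}<\cos\frac{(2n+1)\pi}{2n+2}<\beta_{2n+1}=\cos\frac{2n\pi}{2n+2}\quad(n\ge1);$$ $$-1<\beta_{2n}=\cos\frac{2n\pi}{2n+1}<\gamma_{2n}<\cos\frac{(2n-1)\pi}{2n+1}\quad(n\ge2).$$
   Context: $U_n(x)$ is the Chebyshev polynomial of the second kind ($U_n(\cos\theta)=\sin((n+1)\theta)/\sin\theta$), with $U_{-1}=0$. The partial Chebyshev polynomial $U^{\mathrm{e}}_n$ is the polynomial with $U^{\mathrm{e}}_n(\cos\theta)=\frac{\sin((n+1)\theta/2)}{\sin(\theta/2)}$ for even $n$ and $U^{\mathrm{e}}_n(\cos\theta)=\frac{\sin((n+1)\theta/2)}{\sin\theta}$ for odd $n$. For $n\ge0$, $S_{2n}(x)=(2nx+x+2n-1)U_n(x)-(2nx+3x+2n+1)U_{n-1}(x)$ and $S_{2n+1}(x)=2(2nx^2+2x^2+2nx-x-1)U_n(x)-2(2nx+3x+2n+1)U_{n-1}(x)$. *)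

(* Defs.v *)
From HB Require Import structures.
From mathcomp Require Import all_boot all_order all_algebra.
From mathcomp Require Import all_classical all_reals all_analysis.
Set Implicit Arguments. Unset Strict Implicit. Unset Printing Implicit Defensive.
Import Order.TTheory GRing.Theory Num.Theory.
Local Open Scope ring_scope.

(* Ushift R k = U_{k-1} (Chebyshev of the second kind), so Ushift 0 = U_{-1} = 0. *)
Fixpoint Ushift (R : realType) (k : nat) {struct k} : {poly R} :=
  match k with
  | 0 => 0
  | 1 => 1
  | (j.+1 as k1).+1 => 2%:P * 'X * Ushift R k1 - Ushift R j
  end.

Definition Ucheb (R : realType) (n : nat) : {poly R} := Ushift R n.+1.

Definition Spoly (R : realType) (m : nat) : {poly R} :=
  let n := m./2 in
  let nR : R := n%:R in
  if ~~ odd m then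
    (((2 * nR + 1) *: 'X + ((2 * nR - 1)%:P)) * Ucheb R n
     - ((2 * nR + 3) *: 'X + ((2 * nR + 1)%:P)) * Ushift R n)
  else
    (2%:P * ((2 * nR + 2) *: 'X ^+ 2 + (2 * nR - 1) *: 'X - 1) * Ucheb R n
     - 2%:P * ((2 * nR + 3) *: 'X + ((2 * nR + 1)%:P)) * Ushift R n).

(* P is the partial Chebyshev polynomial U^e_n, characterised as in the paper
   by its values at cos θ (wherever the denominator is nonzero). *)
Definition is_Ue (R : realType) (n : nat) (P : {poly R}) : Prop :=
  if ~~ odd n then
    forall t : R, sin (t / 2) != 0 ->
      P.[cos t] = sin ((n%:R + 1) * t / 2) / sin (t / 2)
  else
    forall t : R, sin t != 0 ->
      P.[cos t] = sin ((n%:R + 1) * t / 2) / sin t.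

Definition is_min_zero (R : realType) (p : {poly R}) (b : R) : Prop :=
  root p b /\ forall x : R, root p x -> b <= x.

(* Main.v *)
Require Import Defs.
From HB Require Import structures.
From mathcomp Require Import all_boot all_order all_algebra.
From mathcomp Require Import all_classical all_reals all_analysis.
From mathcomp Require Import ring lra zify.
Import Order.TTheory GRing.Theory Num.Theory.
Local Open Scope ring_scope.

Section Aux.
Variable R : realType.

Lemma size_Ushift k : (size (Ushift R k) <= k)%N.
Proof.
elim/ltn_ind: k => -[|[|j]] IH /=.
- by rewrite size_poly0.
- by rewrite size_poly1.
- have h1 := IH j.+1 (ltnSn _). have h2 := IH j (leqW (ltnSn _)).
  have hX : (size ((2%:P * 'X)%R : {poly R}) <= 2)%N.
    rewrite (leq_trans (size_polyMleq _ _)) // size_polyX.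
    have := size_polyC_leq1 (2 : R). by case: (size (2%:P : {poly R})) => [|[|]].
  have hM : (size ((2%:P * 'X * Ushift R j.+1)%R) <= j.+2)%N.
    rewrite (leq_trans (size_polyMleq _ _)) //.
    move: hX h1; lia.
  rewrite (leq_trans (size_polyD _ _)) // geq_max size_polyN hM /=.
  by rewrite (leq_trans h2) // leqW.
Qed.

Lemma Cheb k t : (Ushift R k).[cos t] * sin t = sin (k%:R * t).
Proof.
elim/ltn_ind: k => -[|[|j]] IH /=.
- by rewrite horner0 !mul0r sin0.
- by rewrite hornerC !mul1r.
- have h1 := IH j.+1 (ltnSn _). have h2 := IH j (leqW (ltnSn _)).
  rewrite hornerD hornerN !hornerM hornerC hornerX.
  transitivity (2 * cos t * ((Ushift R j.+1).[cos t] * sin t) - (Ushift R j).[cos t] * sin t); first by ring.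
  rewrite h1 h2.
  have -> : j.+2%:R * t = j.+1%:R * t + t by rewrite -[in RHS](mulr1n t) -natr1 mulrDl mul1r.
  have -> : j%:R * t = j.+1%:R * t - t by rewrite -natr1 mulrDl mul1r addrK.
  rewrite sinB sinD. ring.
Qed.

Lemma Ushift1 k : (Ushift R k).[1] = k%:R.
Proof.
elim/ltn_ind: k => -[|[|j]] IH /=.
- by rewrite horner0.
- by rewrite hornerC.
- have h1 := IH j.+1 (ltnSn _). have h2 := IH j (leqW (ltnSn _)).
  rewrite hornerD hornerN !hornerM hornerC hornerX h1 h2.
  rewrite -!natr1. ring.
Qed.

Lemma UshiftN1 k : (Ushift R k).[-1] = (-1) ^+ k.+1 * k%:R.
Proof.
elim/ltn_ind: k => -[|[|j]] IH /=.
- by rewrite horner0 mulr0.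
- by rewrite hornerC expr2 mulrNN !mul1r.
- have h1 := IH j.+1 (ltnSn _). have h2 := IH j (leqW (ltnSn _)).
  rewrite hornerD hornerN !hornerM hornerC hornerX h1 h2.
  rewrite -!natr1 !exprS. ring.
Qed.

End Aux.

Section Aux2.
Variable R : realType.

Lemma ivt_strict (p : {poly R}) a b : a < b -> p.[a] * p.[b] < 0 ->
  exists x, a < x < b /\ root p x.
Proof.
move=> ab hab.
have [x /andP[ax xb] rx] : exists2 x, a <= x <= b & root p x.
  have [ha|ha|ha] := ltgtP p.[a] 0.
  - have hb : 0 < p.[b] by nra.
    by apply: poly_ivt; rewrite ?(ltW ab) ?(ltW ha) ?(ltW hb).
  - have hb : p.[b] < 0 by nra.
    have [y /andP[ay yb] ry] : exists2 y, a <= y <= b & root (- p) y.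
      by apply: poly_ivt; rewrite ?(ltW ab) // !hornerN oppr_le0 oppr_ge0 (ltW ha) (ltW hb).
    by exists y; rewrite ?ay ?yb // -rootN.
  - by move: hab; rewrite ha mul0r ltxx.
exists x; split => //.
move/eqP: rx => rx.
have hx : p.[x] != 0 -> True by [].
have na : x != a by apply/eqP => h; move: hab; rewrite -h rx mul0r ltxx.
have nb : x != b by apply/eqP => h; move: hab; rewrite -h rx mulr0 ltxx.
by rewrite !lt_neqAle ax xb eq_sym na nb.
Qed.

Lemma chain_roots (p : {poly R}) (x : nat -> R) m :
  (forall k, (k < m)%N -> x k.+1 < x k) ->
  (forall k, (k < m)%N -> p.[x k] * p.[x k.+1] < 0) ->
  exists rs : seq R, [/\ size rs = m, uniq rs, all (root p) rs,
     all (fun r => x m < r < x 0) rs & x m <= x 0].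
Proof.
elim: m => [|m IH] hx hs; first by exists [::].
have [rs [s1 s2 s3 s4 s5]] : exists rs : seq R, [/\ size rs = m, uniq rs, all (root p) rs,
     all (fun r => x m < r < x 0) rs & x m <= x 0].
  apply: IH => k hk; [apply: hx | apply: hs]; exact: ltnW.
have hm : p.[x m.+1] * p.[x m] < 0 by rewrite mulrC; exact: hs m (ltnSn _).
have [r [/andP[r1 r2] rr]] := ivt_strict p _ _ (hx m (ltnSn _)) hm.
exists (r :: rs); split => /=.
- by rewrite s1.
- rewrite s2 andbT; apply/negP => hr.
  by move/allP: s4 => /(_ r hr) /andP[+ _]; rewrite ltNge (ltW r2).
- by rewrite rr s3.
- rewrite r1 /= (lt_le_trans r2 s5) /=.
  apply/allP => y hy; move/allP: s4 => /(_ y hy) /andP[h1 ->].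
  by rewrite (lt_trans (hx m (ltnSn _)) h1).
- exact: (le_trans (ltW (hx m (ltnSn _))) s5).
Qed.

Lemma no_more_roots (p : {poly R}) (rs : seq R) y : p != 0 ->
  (size p <= (size rs).+1)%N -> uniq rs -> all (root p) rs -> root p y -> y \in rs.
Proof.
move=> p0 hs u ar ry; apply/negPn/negP => hy.
have := max_poly_roots p0 (rs := y :: rs).
by rewrite /= ry ar hy u /= ltnNge hs => /(_ isT isT).
Qed.

Lemma poly_cos_eq0 (p : {poly R}) :
  (forall t, 0 < t < pi -> p.[cos t] = 0) -> p = 0.
Proof.
move=> H; apply/eqP/negPn/negP => p0.
pose N := size p.
pose rs := [seq cos ((i.+1)%:R * (pi : R) / (N.+1)%:R) | i <- iota 0 N].
have ht (i : nat) (hi : (i < N)%N) : 0 < (i.+1)%:R * (pi : R) / (N.+1)%:R < pi.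
  apply/andP; split.
    by rewrite divr_gt0 ?mulr_gt0 ?ltr0n ?pi_gt0.
  rewrite ltr_pdivrMr ?ltr0n // mulrC ltr_pM2l ?pi_gt0 // ltr_nat; lia.
have := max_poly_roots p0 (rs := rs).
have -> : all (root p) rs.
  apply/allP => y /mapP [i]; rewrite mem_iota add0n => /andP[_ hi] ->.
  by apply/eqP; apply: H; apply: ht.
have -> : uniq rs.
  rewrite map_inj_in_uniq ?iota_uniq // => i j.
  rewrite !mem_iota !add0n => /andP[_ hi] /andP[_ hj] e.
  have := cos_inj _ _ e.
  rewrite !in_itv /=.
  have /andP[a1 a2] := ht i hi; have /andP[b1 b2] := ht j hj.
  rewrite (ltW a1) (ltW a2) (ltW b1) (ltW b2) => /(_ isT isT) e3.
  have e4 := mulIf (invr_neq0 (lt0r_neq0 (ltr0Sn R N))) e3.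
  have /eqP := mulIf (lt0r_neq0 (@pi_gt0 R)) e4.
  by rewrite eqr_nat => /eqP [].
by rewrite size_map size_iota ltnn => /(_ isT isT).
Qed.

End Aux2.

Section Aux3.
Variable R : realType.

Lemma sin_halfpiDk k : sin ((pi : R) / 2 + pi *+ k) = (-1) ^+ k.
Proof. by rewrite (alternatingn (@sinDpi R)) sin_pihalf mulr1. Qed.

Lemma cos_halfpiDk k : cos ((pi : R) / 2 + pi *+ k) = 0.
Proof. by rewrite (alternatingn (@cosDpi R)) cos_pihalf mulr0. Qed.

Lemma sin_pik k : sin ((pi : R) *+ k) = 0.
Proof. by rewrite -[_ *+ k]add0r (alternatingn (@sinDpi R)) sin0 mulr0. Qed.

Lemma cos_pik k : cos ((pi : R) *+ k) = (-1) ^+ k.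
Proof. by rewrite -[_ *+ k]add0r (alternatingn (@cosDpi R)) cos0 mulr1. Qed.

Lemma Spoly_odd n : Spoly R (2 * n + 1)%N =
    (2%:P * ((2 * n%:R + 2) *: 'X ^+ 2 + (2 * n%:R - 1) *: 'X - 1) * Ucheb R n
     - 2%:P * ((2 * n%:R + 3) *: 'X + ((2 * n%:R + 1)%:P)) * Ushift R n).
Proof.
have e : (2 * n + 1)%N = (true + n.*2)%N by rewrite addnC mul2n.
by rewrite /Spoly e half_bit_double /= odd_double.
Qed.

Lemma Spoly_even n : Spoly R (2 * n)%N =
    (((2 * n%:R + 1) *: 'X + ((2 * n%:R - 1)%:P)) * Ucheb R n
     - ((2 * n%:R + 3) *: 'X + ((2 * n%:R + 1)%:P)) * Ushift R n).
Proof.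
by rewrite /Spoly mul2n odd_double doubleK.
Qed.

Lemma Sodd_cos n t : (Spoly R (2 * n + 1)%N).[cos t] * sin t =
  2 * (- (1 + cos t) ^+ 2 * sin (n.+1%:R * t)
       + ((2 * n%:R + 3) * cos t + 2 * n%:R + 1) * cos (n.+1%:R * t) * sin t).
Proof.
rewrite Spoly_odd /Ucheb -?polyC1 !(hornerD, hornerN, hornerM, hornerZ, hornerC, hornerX, horner_exp).
set A := (2 * n%:R + 2) * (cos t) ^+ 2 + (2 * n%:R - 1) * cos t - 1.
set B := (2 * n%:R + 3) * cos t + (2 * n%:R + 1).
transitivity (2 * A * ((Ushift R n.+1).[cos t] * sin t) - 2 * B * ((Ushift R n).[cos t] * sin t)).
  rewrite /A /B; ring.
rewrite !Cheb.
have -> : n%:R * t = n.+1%:R * t - t by rewrite -natr1 mulrDl mul1r addrK.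
rewrite sinB /A /B; ring.
Qed.

Lemma Seven_cos n t : (Spoly R (2 * n)%N).[cos t] * sin t =
  - 2 * (1 + cos t) * sin ((2 * n%:R + 1) * t / 2) * cos (t / 2)
  + 4 * (n%:R + (n%:R + 1) * cos t) * cos ((2 * n%:R + 1) * t / 2) * sin (t / 2).
Proof.
rewrite Spoly_even /Ucheb -?polyC1 !(hornerD, hornerN, hornerM, hornerZ, hornerC, hornerX, horner_exp).
set A := (2 * n%:R + 1) * cos t + (2 * n%:R - 1).
set B := (2 * n%:R + 3) * cos t + (2 * n%:R + 1).
transitivity (A * ((Ushift R n.+1).[cos t] * sin t) - B * ((Ushift R n).[cos t] * sin t)).
  rewrite /A /B; ring.
rewrite !Cheb.
have -> : n.+1%:R * t = (2 * n%:R + 1) * t / 2 + t / 2 by rewrite -natr1; field.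
have -> : n%:R * t = (2 * n%:R + 1) * t / 2 - t / 2 by field.
rewrite sinB sinD /A /B.
ring.
Qed.

End Aux3.

Section Aux4.
Variable R : realType.

Lemma sign_alt (f : nat -> R) n : (forall k, (k <= n)%N -> f k * (-1) ^+ k < 0) ->
  forall k, (k < n)%N -> f k * f k.+1 < 0.
Proof.
move=> H k hk.
have h1 := H k (ltnW hk). have h2 := H k.+1 hk.
have : 0 < (f k * (-1) ^+ k) * (f k.+1 * (-1) ^+ k.+1) by rewrite nmulr_rgt0.
have -> : (f k * (-1) ^+ k) * (f k.+1 * (-1) ^+ k.+1) = - (f k * f k.+1) * ((-1) ^+ k) ^+ 2.
  by rewrite exprS; ring.
by rewrite sqrr_sign mulr1 oppr_gt0.
Qed.

Lemma size_mul_le (p q : {poly R}) a b : (size p <= a)%N -> (size q <= b)%N ->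
  (size (p * q)%R <= (a + b).-1)%N.
Proof. move=> ha hb; have := size_polyMleq p q; lia. Qed.

Lemma size_add_le (p q : {poly R}) a : (size p <= a)%N -> (size q <= a)%N ->
  (size (p - q)%R <= a)%N.
Proof. by move=> ha hb; rewrite (leq_trans (size_polyD _ _)) // size_polyN geq_max ha hb. Qed.

Lemma size_lin (a b : R) : (size (a *: 'X + b%:P)%R <= 2)%N.
Proof.
rewrite (leq_trans (size_polyD _ _)) // geq_max (leq_trans (size_polyC_leq1 _)) //.
by rewrite (leq_trans (size_scale_leq _ _)) // size_polyX.
Qed.

Lemma size_quad (a b : R) : (size (a *: 'X ^+ 2 + b *: 'X - 1)%R <= 3)%N.
Proof.
apply: size_add_le; last by rewrite size_poly1.
rewrite (leq_trans (size_polyD _ _)) // geq_max.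
rewrite (leq_trans (size_scale_leq _ _)) ?size_polyXn //=.
by rewrite (leq_trans (size_scale_leq _ _)) // size_polyX.
Qed.

Lemma cos_gtN1 (t : R) : 0 <= t < pi -> -1 < cos t.
Proof.
move=> /andP[t0 tp]; rewrite -cospi ltr_cos // ?in_itv /= ?t0 ?(ltW tp) ?pi_ge0 ?lexx //.
Qed.

Lemma cos_lt1 (t : R) : 0 < t <= pi -> cos t < 1.
Proof.
move=> /andP[t0 tp]; rewrite -cos0 ltr_cos // ?in_itv /= ?lexx ?pi_ge0 //= ?(ltW t0) //.
Qed.

End Aux4.

Section Aux5.
Variable R : realType.

Lemma S_odd_case n : (1 <= n)%N -> exists gamma : R,
  [/\ is_min_zero (Spoly R (2 * n + 1)%N) gamma, -1 < gamma &
      gamma < cos ((2 * n%:R + 1) * pi / (2 * n%:R + 2))].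
Proof.
move=> hn.
pose P := Spoly R (2 * n + 1)%N.
pose t (k : nat) : R := (2 * k%:R + 1) * pi / (2 * n%:R + 2).
pose x k := cos (t k).
have hD : (2 * n%:R + 2 : R) != 0 by rewrite lt0r_neq0 // ltr_wpDl ?mulr_ge0 ?ler0n.
have hDp : (0 : R) < 2 * n%:R + 2 by rewrite ltr_wpDl ?mulr_ge0 ?ler0n.
have ht : forall k, (k <= n)%N -> 0 < t k < pi.
  move=> k hk; apply/andP; split.
    by rewrite /t divr_gt0 // mulr_gt0 ?pi_gt0 // ltr_wpDl ?mulr_ge0 ?ler0n.
  rewrite /t ltr_pdivrMr // mulrC ltr_pM2l ?pi_gt0 //.
  have : (k%:R : R) <= n%:R by rewrite ler_nat.
  lra.
have htk : forall k, (k < n)%N -> t k < t k.+1.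
  move=> k hk; rewrite /t ltr_pM2r ?invr_gt0 // ltr_pM2r ?pi_gt0 // -natr1; lra.
have hx : forall k, (k < n)%N -> x k.+1 < x k.
  move=> k hk; rewrite /x ltr_cos ?htk //.
  - have /andP[a b] := ht k (ltnW hk); by rewrite in_itv /= (ltW a) (ltW b).
  - have /andP[a b] := ht k.+1 hk; by rewrite in_itv /= (ltW a) (ltW b).
have hang : forall k, n.+1%:R * t k = pi / 2 + pi *+ k.
  move=> k; rewrite /t -mulr_natr -natr1; field.
  exact: hD.
have hval : forall k, (k <= n)%N -> P.[x k] * (-1) ^+ k < 0.
  move=> k hk.
  have /andP[a b] := ht k hk.
  have s0 : 0 < sin (t k) by apply: sin_gt0_pi; rewrite a b.
  have c0 : -1 < x k by apply: cos_gtN1; rewrite (ltW a) b.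
  have e := Sodd_cos R n (t k).
  rewrite hang sin_halfpiDk cos_halfpiDk -/(x k) in e.
  have : P.[x k] * (-1) ^+ k * sin (t k) = - 2 * (1 + x k) ^+ 2.
    rewrite -mulrA [_ * sin _]mulrC mulrA -/P e.
    transitivity (- 2 * (1 + x k) ^+ 2 * ((-1) ^+ k) ^+ 2); first by ring.
    by rewrite sqrr_sign mulr1.
  move=> e2.
  have : P.[x k] * (-1) ^+ k * sin (t k) < 0.
    rewrite e2; have h1 : 0 < 1 + x k by lra.
    have h2 : 0 < (1 + x k) ^+ 2 by rewrite exprn_gt0.
    lra.
  by rewrite pmulr_llt0.
have hm1 : P.[-1] = 4 * (-1) ^+ n.
  rewrite /P Spoly_odd /Ucheb -?polyC1 !(hornerD, hornerN, hornerM, hornerZ, hornerC, hornerX, horner_exp).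
  rewrite !UshiftN1 !exprS -natr1; ring.
have hp1 : P.[1] = 0.
  rewrite /P Spoly_odd /Ucheb -?polyC1 !(hornerD, hornerN, hornerM, hornerZ, hornerC, hornerX, horner_exp).
  rewrite !Ushift1 -natr1; ring.
have P0 : P != 0.
  apply/negP => /eqP h; move: hm1; rewrite h horner0 => /eqP.
  by rewrite eq_sym mulf_eq0 signr_eq0 orbF pnatr_eq0.
have hsize : (size P <= n.+3)%N.
  rewrite /P Spoly_odd /Ucheb; apply: size_add_le.
    apply: (leq_trans (@size_mul_le R _ _ 3 n.+1 _ _)) => //.
      apply: (leq_trans (@size_mul_le R _ _ 1 3 _ _)) => //.
        exact: size_polyC_leq1.
      exact: size_quad.
    exact: size_Ushift.
  apply: (leq_trans (@size_mul_le R _ _ 2 n _ _)) => //.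
    apply: (leq_trans (@size_mul_le R _ _ 1 2 _ _)) => //.
      exact: size_polyC_leq1.
    exact: size_lin.
  exact: size_Ushift.
  lia.
have [rs [s1 s2 s3 s4 s5]] := @chain_roots R P x n hx (@sign_alt R (fun k => P.[x k]) n hval).
have hxn : -1 < x n.
  have /andP[a b] := ht n (leqnn n); apply: cos_gtN1; by rewrite (ltW a) b.
have hprod : P.[-1] * P.[x n] < 0.
  have := hval n (leqnn n); rewrite hm1.
  have -> : 4 * (-1) ^+ n * P.[x n] = 4 * (P.[x n] * (-1) ^+ n) by ring.
  lra.
have [g [/andP[g1 g2] rg]] := @ivt_strict R P _ _ hxn hprod.
have hx01 : x 0 < 1.
  have /andP[a b] := ht 0%N (leq0n n); apply: cos_lt1; by rewrite a (ltW b).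
exists g; split => //.
split => // y ry.
have : y \in g :: 1 :: rs.
  apply: (@no_more_roots R P _ _ P0) => //=.
  - by rewrite s1.
  - rewrite s2 andbT !inE negb_or.
    apply/andP; split; first (apply/andP; split).
    + by rewrite lt_eqF // (lt_trans g2) // (le_lt_trans s5).
    + apply/negP => /(allP s4) /andP[+ _]; by rewrite ltNge (ltW g2).
    + apply/negP => /(allP s4) /andP[_ +]; by rewrite ltNge ltW.
  - by rewrite rg /root hp1 eqxx s3.
rewrite !inE => /or3P [/eqP -> | /eqP -> | hy].
- exact: lexx.
- by rewrite ltW // (lt_trans g2) // (le_lt_trans s5).
- by move/(allP s4): hy => /andP[+ _] => /ltW; apply: le_trans; exact: ltW.
Qed.

End Aux5.

Module M6.
Import numFieldNormedType.Exports.
Local Open Scope classical_set_scope.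
Local Open Scope ring_scope.

Section Aux6.
Variable R : realType.

Lemma sin_le_id (z : R) : 0 <= z -> sin z <= z.
Proof.
rewrite le_eqVlt => /orP[/eqP <-|z0]; first by rewrite sin0.
have hd : forall x, x \in `]0, z[ -> is_derive x 1 (@sin R) (cos x).
  by move=> x _; exact: is_derive_sin.
have hc : {within `[0, z], continuous (@sin R)}%classic.
  exact/continuous_subspaceT/continuous_sin.
have [c _] := MVT z0 hd hc; rewrite sin0 subr0 subr0 => ->.
have := cos_le1 c; nra.
Qed.

Lemma cos_lower (d : R) : 0 <= d -> d <= pi -> 1 - d ^+ 2 / 2 <= cos d.
Proof.
move=> d0 dp.
have -> : cos d = 1 - 2 * sin (d / 2) ^+ 2.
  have e : d = d / 2 + d / 2 by field.
  rewrite [in LHS]e cosD.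
  have -> : cos (d / 2) * cos (d / 2) = 1 - sin (d / 2) ^+ 2 by rewrite -expr2 cos2sin2.
  ring.
have h1 : 0 <= sin (d / 2).
  apply: sin_ge0_pi; apply/andP; split; lra.
have h2 : sin (d / 2) <= d / 2 by apply: sin_le_id; rewrite divr_ge0.
nra.
Qed.

End Aux6.

End M6.

Section Aux7.
Variable R : realType.

Lemma beta_bound n : (2 <= n)%N ->
  n%:R + (n%:R + 1) * cos (2 * n%:R * (pi : R) / (2 * n%:R + 1)) < 0.
Proof.
move=> hn.
set N : R := n%:R.
have N2 : 2 <= N by rewrite /N (ler_nat R 2 n).
have hp4 : (pi : R) < 4 by have := @pihalf_lt2 R; lra.
have hp0 : (0 : R) < pi := pi_gt0 R.
set d := pi / (2 * N + 1).
have hD : 0 < 2 * N + 1 by lra.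
have hdd : d * (2 * N + 1) = pi by rewrite /d; field; lra.
have d0 : 0 < d by rewrite /d divr_gt0.
have dp : d <= pi.
  rewrite -hdd; have := ltW d0; nra.
have -> : 2 * N * pi / (2 * N + 1) = pi - d by rewrite /d; field; lra.
rewrite cosB cospi sinpi mul0r addr0 mulN1r.
have hc := @M6.cos_lower R d (ltW d0) dp.
have h1 : d * (2 * N + 1) < 4 by rewrite hdd.
have h2 : d ^+ 2 * (2 * N + 1) ^+ 2 < 16.
  have : 0 <= d * (2 * N + 1) by rewrite hdd ltW.
  move: h1; rewrite -exprMn; nra.
have h3 : (N + 1) * d ^+ 2 < 2.
  have h4 : 16 * (N + 1) <= 2 * (2 * N + 1) ^+ 2 by nra.
  have h5 : 0 < (2 * N + 1) ^+ 2 by rewrite exprn_gt0.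
  have : (N + 1) * d ^+ 2 * (2 * N + 1) ^+ 2 < 2 * (2 * N + 1) ^+ 2 by nra.
  by rewrite ltr_pM2r.
nra.
Qed.

End Aux7.

Section Aux8.
Variable R : realType.

Lemma S_even_case n : (2 <= n)%N -> exists gamma : R,
  [/\ is_min_zero (Spoly R (2 * n)%N) gamma,
      cos (2 * n%:R * pi / (2 * n%:R + 1)) < gamma &
      gamma < cos ((2 * n%:R - 1) * pi / (2 * n%:R + 1))].
Proof.
move=> hn.
have [m em] : exists m, n = m.+1 by exists n.-1; lia.
have hnm : (n%:R : R) = m%:R + 1 by rewrite em -natr1.
have hm : (1 <= m)%N by lia.
pose P := Spoly R (2 * n)%N.
pose N : R := n%:R.
have N2 : 2 <= N by rewrite /N (ler_nat R 2 n).
have hp0 : (0 : R) < pi := pi_gt0 R.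
have hDp : (0 : R) < 2 * N + 1 by lra.
have hD : (2 * N + 1 : R) != 0 by rewrite lt0r_neq0.
pose t (k : nat) : R := (2 * k%:R + 1) * pi / (2 * N + 1).
pose x k := cos (t k).
have ht : forall k, (k <= m)%N -> 0 < t k < pi.
  move=> k hk; apply/andP; split.
    by rewrite /t divr_gt0 // mulr_gt0 // ltr_wpDl ?mulr_ge0 ?ler0n.
  rewrite /t ltr_pdivrMr // mulrC ltr_pM2l //.
  have : (k%:R : R) <= m%:R by rewrite ler_nat.
  rewrite /N hnm; lra.
have htk : forall k, (k < m)%N -> t k < t k.+1.
  move=> k hk; rewrite /t ltr_pM2r ?invr_gt0 // ltr_pM2r // -natr1; lra.
have hx : forall k, (k < m)%N -> x k.+1 < x k.
  move=> k hk; rewrite /x ltr_cos ?htk //.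
  - have /andP[a b] := ht k (ltnW hk); by rewrite in_itv /= (ltW a) (ltW b).
  - have /andP[a b] := ht k.+1 hk; by rewrite in_itv /= (ltW a) (ltW b).
have hang : forall k, (2 * N + 1) * t k / 2 = pi / 2 + pi *+ k.
  move=> k; rewrite /t -mulr_natr; field; exact: hD.
have hval : forall k, (k <= m)%N -> P.[x k] * (-1) ^+ k < 0.
  move=> k hk.
  have /andP[a b] := ht k hk.
  have s0 : 0 < sin (t k) by apply: sin_gt0_pi; rewrite a b.
  have c0 : -1 < x k by apply: cos_gtN1; rewrite (ltW a) b.
  have ch : 0 < cos (t k / 2) by apply: cos_gt0_pihalf; apply/andP; split; lra.
  have e := Seven_cos R n (t k).
  rewrite -/N hang sin_halfpiDk cos_halfpiDk -/(x k) in e.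
  have : P.[x k] * (-1) ^+ k * sin (t k) = - 2 * (1 + x k) * cos (t k / 2).
    rewrite -mulrA [_ * sin _]mulrC mulrA -/P e.
    transitivity (- 2 * (1 + x k) * cos (t k / 2) * ((-1) ^+ k) ^+ 2); first by ring.
    by rewrite sqrr_sign mulr1.
  move=> e2.
  have : P.[x k] * (-1) ^+ k * sin (t k) < 0.
    rewrite e2; have h1 : 0 < 1 + x k by lra.
    by rewrite -mulrA nmulr_rlt0 ?mulr_gt0 //; lra.
  by rewrite pmulr_llt0.
pose tb : R := 2 * N * pi / (2 * N + 1).
have htb : t m < tb /\ tb < pi.
  rewrite /t /tb; split.
    rewrite ltr_pM2r ?invr_gt0 // ltr_pM2r //; rewrite /N hnm; lra.
  rewrite ltr_pdivrMr //.
  have : 2 * N * pi + pi = pi * (2 * N + 1) by ring.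
  lra.
have hbm : cos tb < x m.
  have /andP[a b] := ht m (leqnn m).
  case: htb => h1 h2.
  rewrite /x ltr_cos; first exact: h1.
  - by rewrite in_itv /=; apply/andP; split; lra.
  - by rewrite in_itv /=; apply/andP; split; lra.
have hvb : P.[cos tb] * (-1) ^+ n < 0.
  have tb0 : 0 < tb by apply: lt_trans htb.1; have /andP[] := ht m (leqnn m).
  have sb : 0 < sin (tb / 2) by apply: sin_gt0_pi; apply/andP; split; lra.
  have sb2 : 0 < sin tb by apply: sin_gt0_pi; apply/andP; split; lra.
  have e := Seven_cos R n tb.
  have hphi : (2 * n%:R + 1) * tb / 2 = pi *+ n.
    by rewrite /tb /N -mulr_natr; field; exact: hD.
  rewrite hphi sin_pik cos_pik in e.
  have hbb := @beta_bound R n hn.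
  have : P.[cos tb] * (-1) ^+ n * sin tb = 4 * (N + (N + 1) * cos tb) * sin (tb / 2).
    transitivity (P.[cos tb] * sin tb * (-1) ^+ n); first by ring.
    rewrite e /N.
    transitivity (4 * (n%:R + (n%:R + 1) * cos tb) * sin (tb / 2) * ((-1) ^+ n) ^+ 2); first by ring.
    by rewrite sqrr_sign mulr1.
  move=> e2.
  have : P.[cos tb] * (-1) ^+ n * sin tb < 0.
    rewrite e2; move: hbb; rewrite -/N -/tb => hbb.
    by rewrite pmulr_llt0 // pmulr_rlt0.
  by rewrite pmulr_llt0.
have hprod : P.[cos tb] * P.[x m] < 0.
  have hv := hval m (leqnn m).
  move: hvb; rewrite em exprS.
  set u := P.[cos tb]; set v := P.[x m]; set w := (-1) ^+ m => hu.
  have h1 : 0 < u * w by move: hu; rewrite mulrA mulrN1 mulNr oppr_lt0.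
  have h2 : (u * w) * (v * w) < 0 by rewrite pmulr_rlt0.
  have : (u * w) * (v * w) = (u * v) * w ^+ 2 by ring.
  by rewrite sqrr_sign mulr1 => <-.
have hp1 : P.[1] = 0.
  rewrite /P Spoly_even /Ucheb -?polyC1 !(hornerD, hornerN, hornerM, hornerZ, hornerC, hornerX, horner_exp).
  rewrite !Ushift1 -natr1; ring.
have P0 : P != 0.
  by apply/negP => /eqP h; move: hprod; rewrite h horner0 mul0r ltxx.
have hsize : (size P <= n.+2)%N.
  rewrite /P Spoly_even /Ucheb; apply: size_add_le.
    apply: (leq_trans (@size_mul_le R _ _ 2 n.+1 _ _)) => //.
      exact: size_lin.
    exact: size_Ushift.
  apply: (leq_trans (@size_mul_le R _ _ 2 n _ _)) => //.
    exact: size_lin.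
  exact: size_Ushift.
have [rs [s1 s2 s3 s4 s5]] := @chain_roots R P x m hx (@sign_alt R (fun k => P.[x k]) m hval).
have [g [/andP[g1 g2] rg]] := @ivt_strict R P _ _ hbm hprod.
have hx01 : x 0%N < 1.
  have /andP[a b] := ht 0%N (leq0n m); apply: cos_lt1; by rewrite a (ltW b).
exists g; split => //; last first.
  have -> : (2 * n%:R - 1) * pi / (2 * n%:R + 1) = t m by rewrite /t /N hnm; congr (_ * _ / _); ring.
  exact: g2.
split => // y ry.
have : y \in g :: 1 :: rs.
  apply: (@no_more_roots R P _ _ P0) => //=.
  - by move: hsize; rewrite em s1.
  - rewrite s2 andbT !inE negb_or.
    apply/andP; split; first (apply/andP; split).
    + by rewrite lt_eqF // (lt_trans g2) // (le_lt_trans s5).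
    + apply/negP => /(allP s4) /andP[+ _]; by rewrite ltNge (ltW g2).
    + apply/negP => /(allP s4) /andP[_ +]; by rewrite ltNge ltW.
  - by rewrite rg /root hp1 eqxx s3.
rewrite !inE => /or3P [/eqP -> | /eqP -> | hy].
- exact: lexx.
- by rewrite ltW // (lt_trans g2) // (le_lt_trans s5).
- by move/(allP s4): hy => /andP[+ _] => /ltW; apply: le_trans; exact: ltW.
Qed.

End Aux8.

Section Aux9.
Variable R : realType.

Lemma Ue_odd_eq (Ue : {poly R}) n : is_Ue (2 * n + 1)%N Ue -> Ue = Ucheb R n.
Proof.
rewrite /is_Ue (_ : odd (2 * n + 1) = true) /=; last by rewrite oddD oddM.
move=> H; apply/eqP; rewrite -subr_eq0; apply/eqP; apply: poly_cos_eq0 => t /andP[t0 tp].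
have s0 : 0 < sin t by apply: sin_gt0_pi; rewrite t0 tp.
have := Cheb R n.+1 t; rewrite -/(Ucheb R n) => e.
rewrite hornerD hornerN H ?lt0r_neq0 //.
have -> : ((2 * n + 1)%:R + 1) * t / 2 = n.+1%:R * t by rewrite natrD natrM -natr1; field.
rewrite -e; field; exact: lt0r_neq0.
Qed.

Lemma Ue_even_eq (Ue : {poly R}) n : is_Ue (2 * n)%N Ue -> Ue = Ucheb R n + Ushift R n.
Proof.
rewrite /is_Ue (_ : odd (2 * n) = false) /=; last by rewrite oddM.
move=> H; apply/eqP; rewrite -subr_eq0; apply/eqP; apply: poly_cos_eq0 => t /andP[t0 tp].
have s0 : 0 < sin t by apply: sin_gt0_pi; rewrite t0 tp.
have h0 : 0 < sin (t / 2) by apply: sin_gt0_pi; apply/andP; split; lra.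
have c0 : 0 < cos (t / 2) by apply: cos_gt0_pihalf; apply/andP; split; lra.
have e1 := Cheb R n.+1 t; have e2 := Cheb R n t.
have est : sin t = 2 * sin (t / 2) * cos (t / 2).
  have e : t = t / 2 + t / 2 by field.
  by rewrite [in LHS]e sinD; ring.
have e3 : n.+1%:R * t = (2 * n%:R + 1) * t / 2 + t / 2 by rewrite -natr1; field.
have e4 : n%:R * t = (2 * n%:R + 1) * t / 2 - t / 2 by field.
rewrite e3 sinD in e1; rewrite e4 sinB in e2.
rewrite !hornerD hornerN H ?lt0r_neq0 // natrM.
apply/eqP; rewrite subr_eq0; apply/eqP.
apply: (mulIf (lt0r_neq0 s0)).
rewrite /Ucheb hornerD [RHS]mulrDl e1 e2 est; field; exact: lt0r_neq0.
Qed.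

Lemma exact_roots_min (p : {poly R}) (n : nat) (a : nat -> R) :
  (0 < n)%N -> p != 0 -> (size p <= n.+1)%N ->
  (forall k, (k < n)%N -> root p (cos (a k))) ->
  (forall k, (k < n)%N -> 0 <= a k <= pi) ->
  (forall k, (k.+1 < n)%N -> a k < a k.+1) ->
  is_min_zero p (cos (a n.-1)).
Proof.
move=> n0 p0 hs hr hi hm.
have mono : forall i j, (i < j)%N -> (j < n)%N -> a i < a j.
  move=> i j; elim: j => // j IH; rewrite ltnS leq_eqVlt => /orP[/eqP -> | hij] hj.
    exact: hm.
  by apply: lt_trans (IH hij (ltnW hj)) (hm j hj).
have inI : forall k, (k < n)%N -> a k \in `[0, pi].
  by move=> k hk; rewrite in_itv /=; apply: hi.
pose rs := [seq cos (a k) | k <- iota 0 n].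
have hrs : forall y, root p y -> y \in rs.
  move=> y ry; apply: (@no_more_roots R p rs y p0) => //.
  - by rewrite size_map size_iota.
  - rewrite map_inj_in_uniq ?iota_uniq // => i j.
    rewrite !mem_iota !add0n => /andP[_ hi'] /andP[_ hj'] e.
    have := cos_inj (inI i hi') (inI j hj') e => e'.
    case: (ltngtP i j) => // hij.
    + by have := mono i j hij hj'; rewrite e' ltxx.
    + by have := mono j i hij hi'; rewrite e' ltxx.
  - by apply/allP => z /mapP [k]; rewrite mem_iota add0n => /andP[_ hk] ->; apply: hr.
split; first by apply: hr; rewrite prednK.
move=> y /hrs /mapP [k]; rewrite mem_iota add0n => /andP[_ hk] ->.
have hk' : (k <= n.-1)%N by lia.
move: hk'; rewrite leq_eqVlt => /orP[/eqP -> | hlt]; first exact: lexx.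
apply: ltW; rewrite ltr_cos ?inI //; last by rewrite prednK.
by apply: mono => //; rewrite prednK.
Qed.

End Aux9.

Section Aux10.
Variable R : realType.

Lemma Ue_odd_case (Ue : {poly R}) n : (1 <= n)%N -> is_Ue (2 * n + 1)%N Ue ->
  is_min_zero Ue (cos (2 * n%:R * pi / (2 * n%:R + 2))) /\
  cos ((2 * n%:R + 1) * (pi : R) / (2 * n%:R + 2)) < cos (2 * n%:R * pi / (2 * n%:R + 2)).
Proof.
move=> hn hU; rewrite (@Ue_odd_eq R Ue n hU).
have hp0 : (0 : R) < pi := pi_gt0 R.
have hD : (0 : R) < n.+1%:R by rewrite ltr0n.
pose a (k : nat) : R := k.+1%:R * pi / n.+1%:R.
have ha : forall k, (k < n)%N -> 0 < a k < pi.
  move=> k hk; apply/andP; split; first by rewrite /a divr_gt0 ?mulr_gt0 ?ltr0n.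
  rewrite /a ltr_pdivrMr // mulrC ltr_pM2l // ltr_nat; lia.
have e : 2 * n%:R * pi / (2 * n%:R + 2) = a n.-1.
  rewrite /a prednK // -natr1; field.
  have : (0 : R) <= n%:R by rewrite ler0n.
  lra.
split.
  rewrite e; apply: exact_roots_min => //.
  - apply/negP => /eqP h; have := Ushift1 R n.+1; rewrite -/(Ucheb R n) h horner0.
    by move/eqP; rewrite eq_sym pnatr_eq0.
  - exact: size_Ushift.
  - move=> k hk; have /andP[a0 ap] := ha k hk.
    have s0 : 0 < sin (a k) by apply: sin_gt0_pi; rewrite a0 ap.
    have := Cheb R n.+1 (a k).
    have -> : n.+1%:R * a k = pi *+ k.+1 by rewrite /a -mulr_natr; field; exact: lt0r_neq0.
    rewrite sin_pik => /eqP; rewrite mulf_eq0 (negbTE (lt0r_neq0 s0)) orbF.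
    by rewrite /root /Ucheb.
  - by move=> k hk; have /andP[a0 ap] := ha k hk; rewrite (ltW a0) (ltW ap).
  - move=> k hk; rewrite /a ltr_pM2r ?invr_gt0 // ltr_pM2r // ltr_nat //.
have h0 : (0 : R) <= n%:R by rewrite ler0n.
rewrite ltr_cos.
- rewrite ltr_pM2r ?invr_gt0; last lra.
  rewrite ltr_pM2r //; lra.
- rewrite in_itv /=; apply/andP; split.
    by rewrite divr_ge0 ?mulr_ge0 //; lra.
  rewrite ler_pdivrMr; last lra.
  rewrite mulrC ler_pM2l //; lra.
- rewrite in_itv /=; apply/andP; split.
    by rewrite divr_ge0 ?mulr_ge0 //; lra.
  rewrite ler_pdivrMr; last lra.
  rewrite mulrC ler_pM2l //; lra.
Qed.

End Aux10.

Section Aux11.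
Variable R : realType.

Lemma Ue_even_case (Ue : {poly R}) n : (1 <= n)%N -> is_Ue (2 * n)%N Ue ->
  is_min_zero Ue (cos (2 * n%:R * pi / (2 * n%:R + 1))) /\
  -1 < cos (2 * n%:R * (pi : R) / (2 * n%:R + 1)).
Proof.
move=> hn hU.
have eU := @Ue_even_eq R Ue n hU.
move: hU; rewrite /is_Ue (_ : odd (2 * n) = false) /=; last by rewrite oddM.
move=> hU.
have hp0 : (0 : R) < pi := pi_gt0 R.
have h0 : (0 : R) <= n%:R by rewrite ler0n.
have hD : (0 : R) < 2 * n%:R + 1 by lra.
pose a (k : nat) : R := 2 * k.+1%:R * pi / (2 * n%:R + 1).
have ha : forall k, (k < n)%N -> 0 < a k < pi.
  move=> k hk; apply/andP; split; first by rewrite /a divr_gt0 ?mulr_gt0 ?ltr0n.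
  rewrite /a ltr_pdivrMr //.
  have -> : 2 * k.+1%:R * (pi : R) = pi * (2 * k.+1%:R) by ring.
  rewrite ltr_pM2l //.
  have : (k.+1%:R : R) <= n%:R by rewrite ler_nat.
  lra.
have e : 2 * n%:R * pi / (2 * n%:R + 1) = a n.-1 by rewrite /a prednK.
rewrite e; split; last first.
  have hn1 : (n.-1 < n)%N by rewrite prednK.
  have /andP[a0 ap] := ha n.-1 hn1.
  by apply: cos_gtN1; rewrite (ltW a0) ap.
apply: exact_roots_min => //.
- rewrite eU; apply/negP => /eqP h; have := congr1 (fun p => p.[1]) h.
  rewrite /= /Ucheb hornerD !Ushift1 horner0 => /eqP.
  by rewrite -natrD pnatr_eq0.
- rewrite eU /Ucheb (leq_trans (size_polyD _ _)) // geq_max size_Ushift /=.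
  by rewrite (leq_trans (size_Ushift R n)).
- move=> k hk; have /andP[a0 ap] := ha k hk.
  have s0 : 0 < sin (a k / 2) by apply: sin_gt0_pi; apply/andP; split; lra.
  rewrite /root hU.
    have -> : ((2 * n)%:R + 1) * a k / 2 = (pi : R) *+ k.+1.
      rewrite /a natrM -mulr_natr; field.
      by rewrite lt0r_neq0.
    by rewrite sin_pik mul0r.
  exact: lt0r_neq0 s0.
- by move=> k hk; have /andP[a0 ap] := ha k hk; rewrite (ltW a0) (ltW ap).
- move=> k hk; rewrite /a ltr_pM2r ?invr_gt0 // ltr_pM2r // ltr_pM2l // ltr_nat //.
Qed.

End Aux11.

Theorem mainTheorem17 (R : realType) (Ue : nat -> {poly R})
    (hUe : forall n : nat, is_Ue n (Ue n)) :
  [/\ is_min_zero (Ue 2) (- (1 / 2)),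
      is_min_zero (Spoly R 2) (- (1 / 2)),
      (forall n : nat, (1 <= n)%N ->
         exists beta gamma : R,
           [/\ is_min_zero (Ue (2 * n + 1)%N) beta,
               is_min_zero (Spoly R (2 * n + 1)%N) gamma,
               -1 < gamma /\
               gamma < cos ((2 * n%:R + 1) * pi / (2 * n%:R + 2)),
               cos ((2 * n%:R + 1) * pi / (2 * n%:R + 2)) < beta &
               beta = cos (2 * n%:R * pi / (2 * n%:R + 2))]) &
      (forall n : nat, (2 <= n)%N ->
         exists beta gamma : R,
           [/\ is_min_zero (Ue (2 * n)%N) beta,
               is_min_zero (Spoly R (2 * n)%N) gamma,
               -1 < beta /\
               beta = cos (2 * n%:R * pi / (2 * n%:R + 1)),
               beta < gamma &
               gamma < cos ((2 * n%:R - 1) * pi / (2 * n%:R + 1))])].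
Proof.
split.
- have eU := @Ue_even_eq R (Ue 2) 1 (hUe 2).
  have ev : forall x, (Ue 2).[x] = 2 * x + 1.
    move=> x; rewrite eU /Ucheb /= -?polyC1.
    rewrite !(hornerD, hornerN, hornerM, hornerC, hornerX, horner0).
    match goal with |- ?g => idtac g end; ring.
  split; first by rewrite /root ev; apply/eqP; field.
  move=> y; rewrite /root ev => /eqP h.
  have -> : y = - (1 / 2) by rewrite -[y]mulr1 -(divff (x := 2)) ?pnatr_eq0 //; lra.
  exact: lexx.
- have ev : forall x, (Spoly R 2).[x] = 3 * ((2 * x + 1) * (x - 1)).
    move=> x; change (Spoly R 2) with (Spoly R (2 * 1)%N); rewrite Spoly_even /Ucheb /= -?polyC1.
    rewrite !(hornerD, hornerN, hornerM, hornerC, hornerX, hornerZ, horner0).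
    rewrite mulr1; ring.
  split; first by rewrite /root ev; apply/eqP; field.
  move=> y; rewrite /root ev => /eqP /eqP.
  rewrite !mulf_eq0 pnatr_eq0 /= => /orP[] /eqP h.
    have -> : y = - (1 / 2) by lra.
    exact: lexx.
  lra.
- move=> n hn.
  have [g [hg g1 g2]] := @S_odd_case R n hn.
  have [hb hlt] := @Ue_odd_case R (Ue (2 * n + 1)%N) n hn (hUe _).
  by exists (cos (2 * n%:R * pi / (2 * n%:R + 2))), g; split.
- move=> n hn.
  have hn1 : (1 <= n)%N by apply: leq_trans hn.
  have [g [hg g1 g2]] := @S_even_case R n hn.
  have [hb hlt] := @Ue_even_case R (Ue (2 * n)%N) n hn1 (hUe _).
  by exists (cos (2 * n%:R * pi / (2 * n%:R + 1))), g; split.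
Qed.
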